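(* Let $p$ be a prime, let $\mathcal{F}$ be a saturated fusion system on a finite $p$-group $S$, and let $G$ be a finite group which contains $S$ as a subgroup and realizes $\mathcal{F}$. Consider the square matrix \[ \bigl( |P\backslash G /Q| \bigr)_{P,Q}, \] whose rows and columns are indexed by the $G$-conjugacy classes of subgroups of $S$ and whose $(P,Q)$-entry is the number of $(P,Q)$-double cosets in $G$. Then the rank of this matrix (over $\mathbb{Q}$) is equal to the number of $\mathcal{F}$-conjugacy classes of cyclic subgroups of $S$.
   Context: A fusion system $\mathcal{F}$ on a finite $p$-group $S$ is a category whose objects are the subgroups of $S$ and whose morphisms $P\to Q$ are certain injective group homomorphisms, containing all maps induced by conjugation by elements of $S$ and closed under restriction and inverses of isomorphisms; ''saturated'' is the standard saturation axiom (Sylow-type axioms) of Broto–Levi–Oliver. Two subgroups $P,P'\leq S$ are $\mathcal{F}$-conjugate if there is an isomorphism $P\to P'$ in $\mathcal{F}$. A finite group $G$ containing $S$ (not necessarily as a Sylow subgroup) realizes $\mathcal{F}$ if for all $P,Q\leq S$ the morphisms $P\to Q$ in $\mathcal{F}$ are exactly the maps $u\mapsto gug^{-1}$ for $g\in G$ with $gPg^{-1}\leq Q$. In particular, two subgroups of $S$ are $G$-conjugate iff they are $\mathcal{F}$-conjugate. *)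

(* Defs.v *)
From mathcomp Require Import all_boot all_fingroup all_solvable all_algebra.

Set Implicit Arguments.
Unset Strict Implicit.
Unset Printing Implicit Defensive.

Local Open Scope group_scope.

(* Conventions: a morphism P -> Q of a fusion system is encoded as a finite
   function f : {ffun gT -> gT} that is an injective group homomorphism on P
   with f(P) <= Q, and that is the identity outside P (canonical encoding,
   so that two morphisms are equal iff they agree on P). *)

Section FusionDefs.
Variable gT : finGroupType.
Implicit Types (P Q : {set gT}) (f g : {ffun gT -> gT}).

(* c_g restricted to P : u |-> g u g^-1 *)
Definition conj_map P (g : gT) : {ffun gT -> gT} :=
  [ffun u => if u \in P then u ^ g^-1 else u].

Definition restr_map P f : {ffun gT -> gT} :=
  [ffun x => if x \in P then f x else x].

Definition comp_map P f g : {ffun gT -> gT} :=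
  [ffun x => if x \in P then g (f x) else x].

Definition is_hom P Q f : bool :=
  [&& [forall x in P, forall y in P, f (x * y) == f x * f y],
      [forall x in P, forall y in P, (f x == f y) ==> (x == y)],
      f @: P \subset Q &
      [forall x in ~: P, f x == x]].

Definition fusion_system (S : {group gT})
    (hom : {set gT} -> {set gT} -> pred {ffun gT -> gT}) : Prop :=
  [/\
      (forall P Q : {group gT}, P \subset S -> Q \subset S ->
         forall f, hom P Q f -> is_hom P Q f),
      (forall P Q : {group gT}, P \subset S -> Q \subset S ->
         forall s, s \in S -> P :^ s^-1 \subset Q -> hom P Q (conj_map P s)),
      (forall P Q P' Q' : {group gT}, P \subset S -> Q \subset S ->
         P' \subset P -> Q' \subset S ->
         forall f, hom P Q f -> f @: P' \subset Q' -> hom P' Q' (restr_map P' f)),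
      (forall P Q R : {group gT}, P \subset S -> Q \subset S -> R \subset S ->
         forall f g, hom P Q f -> hom Q R g -> hom P R (comp_map P f g)) &
      (forall P Q : {group gT}, P \subset S -> Q \subset S ->
         forall f, hom P Q f -> f @: P = Q ->
         exists2 g, hom Q P g & {in P, forall x, g (f x) = x})].

Definition Fconj (hom : {set gT} -> {set gT} -> pred {ffun gT -> gT}) P Q : bool :=
  [exists f, hom P Q f && (f @: P == Q)].

Definition AutF (hom : {set gT} -> {set gT} -> pred {ffun gT -> gT}) P
  : {set {ffun gT -> gT}} := [set f | hom P P f].

Definition AutS (S : {set gT}) P : {set {ffun gT -> gT}} :=
  [set conj_map P s | s in 'N_S(P)].

Definition fully_centralized (S : {group gT})
    (hom : {set gT} -> {set gT} -> pred {ffun gT -> gT}) (P : {set gT}) : Prop :=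
  forall Q : {group gT}, Q \subset S -> Fconj hom P Q -> #|'C_S(Q)| <= #|'C_S(P)|.

Definition fully_normalized (S : {group gT})
    (hom : {set gT} -> {set gT} -> pred {ffun gT -> gT}) (P : {set gT}) : Prop :=
  forall Q : {group gT}, Q \subset S -> Fconj hom P Q -> #|'N_S(Q)| <= #|'N_S(P)|.

(* N_phi = { g in N_S(P) | phi c_g phi^-1 in Aut_S(phi(P)) }, phi(P) = Q *)
Definition Nphi (S : {set gT}) P Q f : {set gT} :=
  [set g in 'N_S(P) | [exists t in 'N_S(Q),
      [forall x in P, f (x ^ g^-1) == (f x) ^ t^-1]]].

(* Saturation axioms of Broto-Levi-Oliver.  "Aut_S(P) is a Sylow
   p-subgroup of Aut_F(P)": Aut_S(P) is a p-subgroup of Aut_F(P) whose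
   index is prime to p. *)
Definition saturated (p : nat) (S : {group gT})
    (hom : {set gT} -> {set gT} -> pred {ffun gT -> gT}) : Prop :=
  [/\ fusion_system S hom,
      (forall P : {group gT}, P \subset S -> fully_normalized S hom P ->
         [/\ fully_centralized S hom P,
             AutS S P \subset AutF hom P,
             p.-nat #|AutS S P|,
             #|AutS S P| %| #|AutF hom P| &
             ~~ (p %| #|AutF hom P| %/ #|AutS S P|)]) &
      (forall P Q : {group gT}, P \subset S -> Q \subset S ->
         forall f, hom P S f -> f @: P = Q -> fully_centralized S hom Q ->
         exists2 g, hom (Nphi S P Q f) S g & {in P, forall x, g x = f x})].

Definition realizes (G S : {group gT})
    (hom : {set gT} -> {set gT} -> pred {ffun gT -> gT}) : Prop :=
  forall P Q : {group gT}, P \subset S -> Q \subset S ->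
    forall f, hom P Q f =
      [exists g in G, (P :^ g^-1 \subset Q) && (f == conj_map P g)].

Definition subgroups_of (S : {set gT}) : {set {set gT}} :=
  [set P : {set gT} | group_set P && (P \subset S)].

Definition Gclasses (G S : {set gT}) : {set {set {set gT}}} :=
  [set P :^: G | P in subgroups_of S].

Definition class_rep (C : {set {set gT}}) : {set gT} :=
  odflt set0 [pick P in C].

Definition dcoset_count (P Q G : {set gT}) : nat :=
  #|[set (P :* g) * Q | g in G]|.

Definition dc_matrix (G S : {set gT}) : 'M[rat]_(#|Gclasses G S|) :=
  \matrix_(i, j) (dcoset_count (class_rep (enum_val i))
                               (class_rep (enum_val j)) G)%:R%R.

Definition Fclasses_cyclic (S : {set gT})
    (hom : {set gT} -> {set gT} -> pred {ffun gT -> gT}) : {set {set {set gT}}} :=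
  [set [set Q in subgroups_of S | Fconj hom P Q]
     | P in subgroups_of S & cyclic P].

End FusionDefs.

(* Main.v *)
Require Import Defs.
From mathcomp Require Import all_boot all_fingroup all_solvable all_algebra.
From mathcomp Require Import ring.

Module MLA.
Import GRing.Theory Num.Theory.
Set Implicit Arguments.
Unset Strict Implicit.
Local Open Scope ring_scope.

Lemma tri_row_free k (X : 'M[rat]_k) (w : 'I_k -> nat) :
  (forall i, X i i != 0) ->
  (forall i j, i != j -> X i j != 0 -> (w i < w j)%N) -> row_free X.
Proof.
move=> Xd Xt; apply: inj_row_free => v vX; apply/rowP => i0.
rewrite mxE; apply/eqP/negPn/negP => vi0.
have [i vi imin] : exists2 i, v 0 i != 0 & (forall j, v 0 j != 0 -> (w i <= w j)%N).
  by case: (@arg_minnP _ i0 (fun i => v 0 i != 0) w vi0) => i vi imin; exists i.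
have := congr1 (fun M : 'rV_k => M 0 i) vX; rewrite !mxE.
rewrite (bigD1 i) //= big1 ?addr0; first by apply/eqP; rewrite mulf_neq0.
move=> l li; have [->|vl] := eqVneq (v 0 l) 0; first by rewrite mul0r.
have [Xl|Xl] := eqVneq (X l i) 0; first by rewrite Xl mulr0.
by have := Xt l i li Xl; rewrite ltnNge imin.
Qed.

Lemma rank_factor n k (M : 'M[rat]_n) (a : 'I_n -> 'I_k -> rat)
   (b : 'I_k -> 'I_n -> rat) (f : 'I_k -> 'I_n) :
  (forall i j, M i j = \sum_c a i c * b c j) ->
  row_free (\matrix_(c, c') a (f c) c') ->
  row_free (\matrix_(c, c') b c (f c')) -> \rank M = k.
Proof.
move=> Mab Af Bf.
pose A := \matrix_(i, c) a i c; pose B := \matrix_(c, j) b c j.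
have MAB : M = A *m B by apply/matrixP => i j; rewrite Mab !mxE; apply: eq_bigr => c _; rewrite !mxE.
pose R := \matrix_(c, i) ((f c == i)%:R : rat).
have RA : R *m A = \matrix_(c, c') a (f c) c'.
  apply/matrixP => c c'; rewrite !mxE (bigD1 (f c)) //= big1 ?addr0.
    by rewrite !mxE eqxx mul1r.
  by move=> i /negbTE ne; rewrite !mxE eq_sym ne mul0r.
have BR : B *m R^T = \matrix_(c, c') b c (f c').
  apply/matrixP => c c'; rewrite !mxE (bigD1 (f c')) //= big1 ?addr0.
    by rewrite !mxE eqxx mulr1.
  by move=> i /negbTE ne; rewrite !mxE eq_sym ne mulr0.
apply/eqP; rewrite eqn_leq; apply/andP; split.
  by rewrite MAB; apply: (leq_trans (mxrankM_maxl A B)); exact: rank_leq_col.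
have U : (R *m M *m R^T) \in unitmx.
  by rewrite MAB mulmxA -(mulmxA (R *m A)) RA BR unitmx_mul -!row_free_unit Af Bf.
rewrite -(mxrank_unit U).
apply: leq_trans (mxrankM_maxl _ _) _; exact: mxrankM_maxr.
Qed.

Lemma tri_row_free2 k (X : 'M[rat]_k) (w : 'I_k -> nat) :
  (forall i, X i i != 0) ->
  (forall i j, i != j -> X i j != 0 -> (w j < w i)%N) -> row_free X.
Proof.
move=> Xd Xt; apply: inj_row_free => v vX; apply/rowP => i0.
rewrite mxE; apply/eqP/negPn/negP => vi0.
have [i vi imax] : exists2 i, v 0 i != 0 & (forall j, v 0 j != 0 -> (w j <= w i)%N).
  by case: (@arg_maxnP _ i0 (fun i => v 0 i != 0) w vi0) => i vi imax; exists i.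
have := congr1 (fun M : 'rV_k => M 0 i) vX; rewrite !mxE.
rewrite (bigD1 i) //= big1 ?addr0; first by apply/eqP; rewrite mulf_neq0.
move=> l li; have [->|vl] := eqVneq (v 0 l) 0; first by rewrite mul0r.
have [Xl|Xl] := eqVneq (X l i) 0; first by rewrite Xl mulr0.
by have := Xt l i li Xl; rewrite ltnNge imax.
Qed.

Lemma frac_neq0 (m d : nat) : ((m%:R / d%:R : rat) != 0) -> (0 < m)%N.
Proof. by case: m => //; rewrite mul0r eqxx. Qed.

Lemma frac_nz (m d : nat) : (0 < m)%N -> (0 < d)%N -> ((m%:R / d%:R : rat) != 0).
Proof. by move=> m0 d0; rewrite mulf_neq0 ?invr_eq0 // pnatr_eq0 -lt0n. Qed.

End MLA.
Import MLA.

Module MDC.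
Set Implicit Arguments.
Unset Strict Implicit.
Local Open Scope group_scope.

Section DC.
Variable gT : finGroupType.
Implicit Types P Q G : {group gT}.

Lemma dc_same P Q (g h : gT) : h \in (P :* g) * Q -> (P :* h) * Q = (P :* g) * Q.
Proof.
case/mulsgP => a q /rcosetP[p Pp ->] Qq ->.
by rewrite !rcosetM (rcoset_id Pp) -mulgA lcoset_id.
Qed.

Lemma dc_refl P Q (g : gT) : g \in (P :* g) * Q.
Proof. by apply/mulsgP; exists g 1; rewrite ?rcoset_refl ?group1 ?mulg1. Qed.

Lemma dc_sub (G P Q : {group gT}) (g : gT) : P \subset G -> Q \subset G -> g \in G -> (P :* g) * Q \subset G.
Proof.
move=> sPG sQG Gg; apply/subsetP => h /mulsgP[a q /rcosetP[p Pp ->] Qq ->].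
by apply: groupM; [apply: groupM; [exact: (subsetP sPG) | exact: Gg] | exact: (subsetP sQG)].
Qed.

Lemma dc_card P Q (g : gT) :
  (#|((P :* g) * Q)%g| * #|P :&: Q :^ g^-1| = #|P| * #|Q|)%N.
Proof.
rewrite -(card_rcoset _ g^-1).
have -> : (P :* g) * Q :* g^-1 = P * (Q :^ g^-1) by rewrite conjsgE invgK !mulgA.
by rewrite -(mul_cardG P (Q :^ g^-1)%G) cardJg.
Qed.

Lemma dc_count G P Q : P \subset G -> Q \subset G ->
  (dcoset_count P Q G * (#|P| * #|Q|) = \sum_(g in G) #|P :&: Q :^ g^-1|)%N.
Proof.
move=> sPG sQG.
pose Ds := [set (P :* g) * Q | g in G].
rewrite (partition_big (fun g => (P :* g) * Q) (mem Ds)) /=; last first.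
  by move=> g Gg; apply: imset_f.
rewrite /dcoset_count -/Ds -sum_nat_const; apply: eq_bigr => D /imsetP[h Gh ->].
have Dset : [set g in G | (P :* g) * Q == (P :* h) * Q] = (P :* h) * Q.
  apply/setP => g; rewrite inE; apply/andP/idP => [[_ /eqP <-]|Dg].
    exact: dc_refl.
  by rewrite (subsetP (@dc_sub G P Q h sPG sQG Gh)) // (@dc_same P Q _ _ Dg).
have Dpos : 0 < #|(P :* h) * Q| by apply/card_gt0P; exists h; apply: dc_refl.
apply/eqP; rewrite -(eqn_pmul2r Dpos) [X in _ == X]mulnC; apply/eqP.
symmetry; rewrite big_distrr /=.
transitivity (\sum_(g in [set g in G | (P :* g * Q)%g == (P :* h * Q)%g]) (#|P| * #|Q|))%N.
  rewrite big_mkcond /= [RHS]big_mkcond /=; apply: eq_bigr => g _.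
  rewrite inE; case: ifP => [/andP[_ /eqP <-]|]; last by [].
  by rewrite dc_card.
by rewrite sum_nat_const Dset mulnC.
Qed.
End DC.

End MDC.
Import MDC.

Module MRG.

Set Implicit Arguments.
Unset Strict Implicit.
Lemma regroup (T I : finType) (P : {set T}) (Tr : I -> T -> bool) (F : T -> nat) (K : I -> nat) :
 (forall x, x \in P -> exists c0, forall c, Tr c x = (c == c0)) ->
 (forall x c, x \in P -> Tr c x -> F x = K c) ->
 \sum_(x in P) F x = \sum_c #|[set x in P | Tr c x]| * K c.
Proof.
move=> ex1 FK.
transitivity (\sum_(x in P) \sum_c (Tr c x) * K c).
  apply: eq_bigr => x Px; have [c0 Hc0] := ex1 x Px.
  rewrite (bigD1 c0) //= big1 ?addn0 => [|c /negbTE nc]; last by rewrite Hc0 nc.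
  by rewrite Hc0 eqxx mul1n (FK x c0) // Hc0.
rewrite exchange_big /=; apply: eq_bigr => c _.
rewrite -big_distrl /=; congr (_ * _).
by rewrite -sum1_card big_mkcond [RHS]big_mkcond; apply: eq_bigr => x _; rewrite inE; case: (x \in P); case: (Tr c x).
Qed.

End MRG.
Import MRG.

Module MGR.
Set Implicit Arguments.
Unset Strict Implicit.
Local Open Scope group_scope.

Section GR.
Variable gT : finGroupType.
Variables S G : {group gT}.
Hypothesis sSG : S \subset G.

Lemma conjs_class (A : {set gT}) g : g \in G -> (A :^ g) :^: G = A :^: G.
Proof.
move=> Gg; apply/setP => B; apply/imsetP/imsetP => [[x Gx ->]|[x Gx ->]].
  by exists (g * x); rewrite ?groupM // conjsgM.
by exists (g^-1 * x); rewrite ?groupM ?groupV // -conjsgM mulKVg.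
Qed.

Lemma GclassP X : X \in Gclasses G S ->
  exists P0 : {group gT}, P0 \subset S /\ X = P0 :^: G.
Proof.
case/imsetP => P /[!inE] /andP[gP sPS] ->.
by exists (Group gP).
Qed.

Lemma classE {X A} : X \in Gclasses G S -> A \in X -> X = A :^: G.
Proof.
case/GclassP => P0 [_ ->] /imsetP[g Gg ->].
by rewrite conjs_class.
Qed.

Lemma class_share X Y A : X \in Gclasses G S -> Y \in Gclasses G S ->
  A \in X -> A \in Y -> X = Y.
Proof. by move=> GX GY AX AY; rewrite (classE GX AX) (classE GY AY). Qed.

Lemma rep_in {X} : X \in Gclasses G S -> class_rep X \in X.
Proof.
case/GclassP => P0 [_ ->]; rewrite /class_rep; case: pickP => [B //|X0].
have : P0 :^ 1 \in P0 :^: G by apply/imsetP; exists 1.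
by rewrite conjsg1 X0.
Qed.

Lemma rep_class X : X \in Gclasses G S -> X = class_rep X :^: G.
Proof. by move=> GX; apply: classE (rep_in GX). Qed.

Lemma repP X : X \in Gclasses G S ->
  exists P0 : {group gT}, exists2 g, g \in G & P0 \subset S /\ class_rep X = P0 :^ g.
Proof.
move=> GX; have := rep_in GX; case/GclassP: GX => P0 [sP0 ->] /imsetP[g Gg ->].
by exists P0; exists g.
Qed.

Definition fixc (C Q : {set gT}) := #|[set g in G | C \subset Q :^ g^-1]|.

Lemma fixcJ C Q y : y \in G -> fixc (C :^ y) Q = fixc C Q.
Proof.
move=> Gy; rewrite /fixc -[RHS](card_preimset _ (mulgI y)).
apply: eq_card => g; rewrite !inE groupMl // sub_conjg -conjsgM.
by rewrite invMg.
Qed.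

Lemma sum_split (P Q : {group gT}) :
  \sum_(g in G) #|P :&: Q :^ g^-1| = \sum_(x in P) fixc <[x]> Q.
Proof.
transitivity (\sum_(g in G) \sum_(x in P) ((x \in Q :^ g^-1) : nat)).
  apply: eq_bigr => g _; rewrite -sum1_card big_mkcond [RHS]big_mkcond.
  by apply: eq_bigr => x _; rewrite inE; case: (x \in P); case: (x \in Q :^ g^-1).
rewrite exchange_big; apply: eq_bigr => x _.
rewrite /fixc -sum1_card big_mkcond [RHS]big_mkcond; apply: eq_bigr => g _.
by rewrite inE cycle_subG; case: (g \in G); case: (x \in Q :^ g^-1).
Qed.

Lemma rep_sub X : X \in Gclasses G S ->
  exists H : {group gT}, class_rep X = H /\ H \subset G.
Proof.
case/repP=> P0 [g Gg [sP0 ->]]; exists (P0 :^ g)%G; split => //.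
exact: conj_subG Gg (subset_trans sP0 sSG).
Qed.

Lemma cyc_class X x : X \in Gclasses G S -> x \in class_rep X ->
  <[x]> :^: G \in Gclasses G S /\ cyclic (class_rep (<[x]> :^: G)).
Proof.
case/repP=> P0 [g Gg [sP0 ->]] xP.
have xP0 : x ^ g^-1 \in P0 by rewrite -mem_conjg.
have eD : <[x]> = <[x ^ g^-1]> :^ g by rewrite -cycleJ conjgKV.
have YG : <[x]> :^: G \in Gclasses G S.
  rewrite eD conjs_class //; apply: imset_f.
  by rewrite inE groupP /= (subset_trans _ sP0) // cycle_subG.
split => //; have := rep_in YG => /imsetP[y Gy ->].
by rewrite -cycleJ cycle_cyclic.
Qed.

End GR.

End MGR.
Import MGR.

Module MFC.
Set Implicit Arguments.
Unset Strict Implicit.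
Local Open Scope group_scope.

Section FC.
Variable gT : finGroupType.
Variables S G : {group gT}.
Variable hom : {set gT} -> {set gT} -> pred {ffun gT -> gT}.
Hypothesis real : realizes G S hom.

Lemma conj_map_im (P : {set gT}) g : conj_map P g @: P = P :^ g^-1.
Proof. by apply: eq_in_imset => u Pu; rewrite ffunE Pu. Qed.

Lemma Fconj_class (P Q : {set gT}) : P \in subgroups_of S -> Q \in subgroups_of S ->
  Fconj hom P Q = (Q \in P :^: G).
Proof.
rewrite !inE => /andP[gP sPS] /andP[gQ sQS].
have H : forall f, hom P Q f =
    [exists g in G, (P :^ g^-1 \subset Q) && (f == conj_map P g)]
  := @real (Group gP) (Group gQ) sPS sQS.
apply/existsP/imsetP => [[f /andP[]]|[y Gy eQ]].
  rewrite H => /existsP[g /and3P[Gg _ /eqP ->]] /eqP <-.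
  by exists g^-1; rewrite ?groupV // conj_map_im.
exists (conj_map P y^-1); rewrite H eQ conj_map_im invgK eqxx andbT.
by apply/existsP; exists y^-1; rewrite groupV Gy invgK eqxx subxx.
Qed.

Lemma Fclass_eq (P : {set gT}) : P \in subgroups_of S ->
  [set Q in subgroups_of S | Fconj hom P Q] = (P :^: G) :&: subgroups_of S.
Proof.
move=> sP; apply/setP => Q; rewrite inE [RHS]in_setI.
case sQ: (Q \in subgroups_of S); rewrite ?andbF ?andbT //=.
exact: Fconj_class.
Qed.

End FC.

End MFC.
Import MFC.

Module MMain.
Import GRing.Theory Num.Theory.
Local Open Scope group_scope.

Section Main.
Variable gT : finGroupType.
Variables S G : {group gT}.
Hypothesis sSG : S \subset G.

Local Notation n := #|Gclasses G S|.
Definition Rr (i : 'I_n) := class_rep (enum_val i).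
Definition CCi := [set i : 'I_n | cyclic (Rr i)].
Local Notation k := #|CCi|.
Definition fc (c : 'I_k) : 'I_n := enum_val c.
Definition Cc c := Rr (fc c).
Definition XC c := enum_val (fc c).

Lemma XC_G c : XC c \in Gclasses G S.
Proof. exact: enum_valP. Qed.

Lemma Cc_XC c : Cc c \in XC c.
Proof. exact: rep_in (XC_G c). Qed.

Lemma clsame c c' : Cc c \in XC c' -> c = c'.
Proof.
move=> H; have := class_share (XC_G c) (XC_G c') (Cc_XC c) H.
by move/enum_val_inj/enum_val_inj.
Qed.

Lemma ex_cls i x : x \in Rr i -> exists c0, forall c, (<[x]> \in XC c) = (c == c0).
Proof.
move=> xR; have [YG cY] := cyc_class (enum_valP i) xR.
pose i0 := enum_rank_in YG (<[x]> :^: G).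
have ei0 : enum_val i0 = <[x]> :^: G by rewrite enum_rankK_in.
have i0C : i0 \in CCi by rewrite inE /Rr ei0.
pose c0 := enum_rank_in i0C i0.
have ec0 : XC c0 = <[x]> :^: G by rewrite /XC /fc enum_rankK_in.
exists c0 => c; apply/idP/eqP => [xc|->]; last first.
  by rewrite ec0; apply/imsetP; exists 1; rewrite ?group1 ?conjsg1.
apply: enum_val_inj; apply: enum_val_inj.
rewrite -[enum_val (enum_val c)]/(XC c) -[enum_val (enum_val c0)]/(XC c0).
apply: class_share (XC_G c) (XC_G c0) xc _.
by rewrite ec0; apply/imsetP; exists 1; rewrite ?group1 ?conjsg1.
Qed.

Definition aa (i : 'I_n) (c : 'I_k) : rat :=
  ((#|[set x in Rr i | <[x]> \in XC c]|)%:R / (#|Rr i|)%:R)%R.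
Definition bb (c : 'I_k) (j : 'I_n) : rat :=
  ((fixc G (Cc c) (Rr j))%:R / (#|Rr j|)%:R)%R.

Lemma entry_nat i j : (dcoset_count (Rr i) (Rr j) G * (#|Rr i| * #|Rr j|) =
  \sum_c #|[set x in Rr i | <[x]> \in XC c]| * fixc G (Cc c) (Rr j))%N.
Proof.
have [P [eP sPG]] := rep_sub sSG (enum_valP i).
have [Q [eQ sQG]] := rep_sub sSG (enum_valP j).
have ePi : Rr i = P by [].
have eQj : Rr j = Q by [].
rewrite ePi eQj dc_count // sum_split; apply: regroup => [x Px|x c Px xc].
  by apply: (@ex_cls i x); rewrite ePi.
have := xc; rewrite (rep_class (XC_G c)) => /imsetP[y Gy ->].
by rewrite fixcJ.
Qed.

Lemma entry i j : dc_matrix G S i j = (\sum_c aa i c * bb c j)%R.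
Proof.
have [P [eP sPG]] := rep_sub sSG (enum_valP i).
have [Q [eQ sQG]] := rep_sub sSG (enum_valP j).
have nP : (#|Rr i|%:R : rat) != 0%R by rewrite /Rr eP pnatr_eq0 -lt0n cardG_gt0.
have nQ : (#|Rr j|%:R : rat) != 0%R by rewrite /Rr eQ pnatr_eq0 -lt0n cardG_gt0.
rewrite mxE; apply: (GRing.mulIf (GRing.mulf_neq0 nP nQ)).
rewrite -!natrM entry_nat natr_sum mulr_suml; apply: eq_bigr => c _.
rewrite natrM /aa /bb; field; exact/andP.
Qed.

Lemma Cc_cyc c : cyclic (Cc c).
Proof. by have := enum_valP c; rewrite inE. Qed.

Lemma Cc_grp c : exists H : {group gT}, Cc c = H /\ H \subset G.
Proof. exact: (rep_sub sSG (XC_G c)). Qed.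

Lemma rowA : row_free (\matrix_(c, c') aa (fc c) c').
Proof.
apply: (@tri_row_free2 _ _ (fun c => #|Cc c|)) => [c|c c' ncc'].
  rewrite mxE; have [x0 e] := cyclicP (Cc_cyc c).
  have x0C : x0 \in Cc c by rewrite e cycle_id.
  apply: frac_nz; apply/card_gt0P; exists x0 => //.
  by rewrite inE -[Rr _]/(Cc c) x0C -e Cc_XC.
rewrite mxE => /frac_neq0/card_gt0P[x]; rewrite inE -[Rr _]/(Cc c) => /andP[xC xX].
have [H [eH _]] := Cc_grp c.
have sxH : <[x]> \subset H by rewrite cycle_subG -eH.
have := xX; rewrite (rep_class (XC_G c')) => /imsetP[y Gy exy].
rewrite -(cardJg _ y) -exy ltnNge; apply/negP => le.
have ex : <[x]> = H by apply/eqP; rewrite eqEcard sxH -eH.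
by case/eqP: ncc'; apply: clsame; rewrite eH -ex.
Qed.

Lemma rowB : row_free (\matrix_(c, c') bb c (fc c')).
Proof.
apply: (@tri_row_free _ _ (fun c => #|Cc c|)) => [c|c c' ncc'].
  rewrite mxE /bb /fixc; have [H [eH _]] := Cc_grp c.
  apply: frac_nz; last by rewrite -[Rr _]/(Cc c) eH cardG_gt0.
  apply/card_gt0P; exists 1; rewrite inE group1 invg1 conjsg1.
  by rewrite -[Rr _]/(Cc c) subxx.
rewrite mxE /bb /fixc =>  /frac_neq0/card_gt0P[g]; rewrite inE -[Rr (fc c')]/(Cc c') => /andP[Gg sC].
have le : (#|Cc c| <= #|Cc c'|)%N by rewrite -(cardJg (Cc c') g^-1); apply: subset_leq_card.
rewrite ltn_neqAle le andbT; apply/negP => /eqP eqc.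
have eC : Cc c = Cc c' :^ g^-1 by apply/eqP; rewrite eqEcard sC cardJg eqc leqnn.
case/eqP: ncc'; apply: clsame; rewrite eC (rep_class (XC_G c')).
by apply: imset_f; rewrite groupV.
Qed.

Lemma P_in_class (P : {set gT}) : P \in P :^: G.
Proof. by apply/imsetP; exists 1; rewrite ?group1 ?conjsg1. Qed.

Lemma count_eq hom : realizes G S hom -> #|Fclasses_cyclic S hom| = k.
Proof.
move=> real.
pose phi (i : 'I_n) := enum_val i :&: subgroups_of S.
have -> : Fclasses_cyclic S hom = phi @: CCi.
  apply/setP => Y; apply/imsetP/imsetP => [[P] | [i iC ->]].
    rewrite inE => /andP[sP cP] ->.
    have XG : P :^: G \in Gclasses G S by apply: imset_f.
    exists (enum_rank_in XG (P :^: G)); last by rewrite /phi enum_rankK_in // (Fclass_eq real).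
    rewrite inE /Rr enum_rankK_in //.
    have := rep_in XG => /imsetP[y Gy ->].
    move: sP; rewrite inE => /andP[gP _].
    by rewrite (cyclicJ (Group gP)).
  have [P0 [sP0 eP0]] := GclassP (enum_valP i).
  have sP : (P0 : {set gT}) \in subgroups_of S by rewrite inE groupP.
  exists (P0 : {set gT}); last by rewrite (Fclass_eq real) // /phi eP0.
  rewrite inE sP /=; move: iC; rewrite inE.
  have : Rr i \in P0 :^: G by rewrite -eP0; exact: rep_in (enum_valP i).
  by case/imsetP => y Gy ->; rewrite cyclicJ.
rewrite card_in_imset // => i j iC jC eqij.
have [P0 [sP0 eP0]] := GclassP (enum_valP i).
have sP : (P0 : {set gT}) \in subgroups_of S by rewrite inE groupP.
have Pi : (P0 : {set gT}) \in phi i by rewrite inE eP0 P_in_class.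
have := Pi; rewrite eqij inE => /andP[Pj _].
apply: enum_val_inj; apply: class_share (enum_valP i) (enum_valP j) _ Pj.
by rewrite eP0 P_in_class.
Qed.

End Main.


End MMain.
Import MMain.

Local Open Scope group_scope.
Import GRing.Theory Num.Theory.
Theorem theorem1p2 (gT : finGroupType) (p : nat) (S G : {group gT})
    (hom : {set gT} -> {set gT} -> pred {ffun gT -> gT}) :
  prime p -> p.-group S -> S \subset G ->
  saturated p S hom -> realizes G S hom ->
  \rank (dc_matrix G S) = #|Fclasses_cyclic S hom|.
Proof.
move=> _ _ sSG _ real.
rewrite (@count_eq gT S G hom real).
apply: (@rank_factor _ _ _ (@aa _ S G) (@bb _ S G) (@fc _ S G)).
- by move=> i j; apply: entry.
- exact: rowA.
- exact: rowB.
Qed.
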